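(* Let $G=(V=[n],E,(p_{uv})_{(u,v)\in E})$ be an influence graph, $k\in\{2,\dots,n\}$, $\pi$ an optimal adaptive policy with $|\pi|=k$, and $x_v$ the probability that node $v$ is selected by $\pi$. Then for every $S\subseteq V$, $$\mathbb{E}_{\mathbf L,\hat{\mathbf L}}\big[\sigma_{\mathbf L^2(dom(\hat\Psi_\pi)\cup S)}(dom(\hat\Psi_\pi)\cup S)\big]\le\sigma^2(S)+\sum_{v\in V\setminus S}x_v\,\Delta^2_S(v).$$
   Context: $G$ is a directed graph with activation probabilities $p_{uv}\in[0,1]$. $\mathbf L,\hat{\mathbf L}$ are independent random subsets of $E$, each containing every edge $(u,v)$ independently with probability $p_{uv}$. For $L\subseteq E$, $T\subseteq V$, $\sigma_L(T)$ is the number of nodes reachable by a directed path (length $\ge0$) in $(V,L)$ from $T$; $\sigma(T):=\mathbb{E}[\sigma_{\mathbf L}(T)]$. For $T\subseteq V$, $\mathbf L^2(T):=\mathbf L\cup(\hat{\mathbf L}\cap\{(u,w)\in E:u\in T\})$, $\sigma^2(T):=\mathbb{E}[\sigma_{\mathbf L^2(T)}(T)]$, and $\Delta^2_S(v):=\mathbb{E}[\sigma_{\mathbf L^2(\{v\})}(S\cup\{v\})-\sigma_{\mathbf L}(S)]$. Realisations: $\Phi(v):=\{v\}\cup\{z:(v,z)\in\mathbf L\}$ and $\hat\Phi(v):=\{v\}\cup\{z:(v,z)\in\hat{\mathbf L}\}$; a partial realisation is the restriction of $v\mapsto\{v\}\cup\{z:(v,z)\in L\}$ (for some $L\subseteq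 E$) to a subset $dom(\psi)$ of $V$. An adaptive policy $\pi$ maps partial realisations to a node or STOP; it is run from $\psi=\emptyset$, and while $\pi(\psi)=v\ne$ STOP it sets $\psi\leftarrow\psi\cup\{(v,\Phi(v))\}$, ending with $\Psi_\pi$; $\sigma(\pi):=\mathbb{E}[\sigma_{\mathbf L}(dom(\Psi_\pi))]$; $|\pi|=k$ means $|dom(\Psi_\pi)|=k$ always; $\pi$ is optimal if it maximizes $\sigma(\pi)$ among policies with $|\pi|=k$. $\hat\Psi_\pi$ denotes the final partial realisation when $\pi$ is run with feedback $\hat\Phi(v)$ instead of $\Phi(v)$. *)

(* Defs.v *)
From mathcomp Require Import all_boot all_order all_algebra.
Set Implicit Arguments. Unset Strict Implicit. Unset Printing Implicit Defensive.
Import Order.TTheory GRing.Theory Num.Theory.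
Local Open Scope ring_scope.

Definition edgeset (n : nat) := {set ('I_n * 'I_n)}.

Definition reach n (L : edgeset n) (T : {set 'I_n}) : {set 'I_n} :=
  [set v | [exists t in T, connect (fun a b => (a, b) \in L) t v]].

Definition sigmaL n (L : edgeset n) (T : {set 'I_n}) : nat := #|reach L T|.

Definition L2 n (E L Lh : edgeset n) (T : {set 'I_n}) : edgeset n :=
  L :|: (Lh :&: [set e in E | e.1 \in T]).

Definition prL (R : realFieldType) n (E : edgeset n) (p : 'I_n -> 'I_n -> R)
  (L : edgeset n) : R :=
  if L \subset E then
    \prod_(e in E) (if e \in L then p e.1 e.2 else 1 - p e.1 e.2)
  else 0.

Definition Exp1 (R : realFieldType) n (E : edgeset n) (p : 'I_n -> 'I_n -> R)
  (f : edgeset n -> R) : R :=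
  \sum_(L : edgeset n) prL E p L * f L.

Definition Exp2 (R : realFieldType) n (E : edgeset n) (p : 'I_n -> 'I_n -> R)
  (f : edgeset n -> edgeset n -> R) : R :=
  \sum_(L : edgeset n) \sum_(Lh : edgeset n) prL E p L * prL E p Lh * f L Lh.

Definition sigma (R : realFieldType) n (E : edgeset n) (p : 'I_n -> 'I_n -> R)
  (T : {set 'I_n}) : R := Exp1 E p (fun L => (sigmaL L T)%:R).

Definition sigma2 (R : realFieldType) n (E : edgeset n) (p : 'I_n -> 'I_n -> R)
  (T : {set 'I_n}) : R := Exp2 E p (fun L Lh => (sigmaL (L2 E L Lh T) T)%:R).

Definition Delta2 (R : realFieldType) n (E : edgeset n) (p : 'I_n -> 'I_n -> R)
  (S : {set 'I_n}) (v : 'I_n) : R :=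
  Exp2 E p (fun L Lh =>
    (sigmaL (L2 E L Lh [set v]) (v |: S))%:R - (sigmaL L S)%:R).

Definition Phi n (L : edgeset n) (v : 'I_n) : {set 'I_n} :=
  v |: [set z | (v, z) \in L].

(* Partial realisations: None = outside the domain. *)
Definition PR (n : nat) := {ffun 'I_n -> option {set 'I_n}}.

Definition dom n (psi : PR n) : {set 'I_n} := [set v | psi v != None].

(* Adaptive policy: None = STOP. *)
Definition policy (n : nat) := PR n -> option 'I_n.

Definition pstep n (pi : policy n) (L : edgeset n) (psi : PR n) : PR n :=
  match pi psi with
  | None => psi
  | Some v => [ffun u => if u == v then Some (Phi L v) else psi u]
  end.

(* A productive step enlarges the domain, a step
   selecting an already observed node leaves psi unchanged (so the run
   never terminates); hence the run terminates iff pi (Psi pi L) = None,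
   and then Psi pi L is the final partial realisation. *)
Definition Psi n (pi : policy n) (L : edgeset n) : PR n :=
  iter n (pstep pi L) [ffun _ => None].

Definition has_size n (E : edgeset n) (pi : policy n) (k : nat) : Prop :=
  forall L : edgeset n, L \subset E ->
    pi (Psi pi L) = None /\ #|dom (Psi pi L)| = k.

Definition sigma_pol (R : realFieldType) n (E : edgeset n)
  (p : 'I_n -> 'I_n -> R) (pi : policy n) : R :=
  Exp1 E p (fun L => (sigmaL L (dom (Psi pi L)))%:R).

Definition xsel (R : realFieldType) n (E : edgeset n)
  (p : 'I_n -> 'I_n -> R) (pi : policy n) (v : 'I_n) : R :=
  Exp1 E p (fun L => (v \in dom (Psi pi L))%:R).

(* Main.v *)
Require Import Defs.
From mathcomp Require Import all_boot all_order all_algebra ring.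
Import Order.TTheory GRing.Theory Num.Theory.

Section C.
Variable n : nat.
Implicit Types (L : edgeset n) (T : {set 'I_n}).

Lemma connect_ind (X : finType) (e : rel X) (P : X -> Prop) x y :
  P x -> (forall a b, P a -> e a b -> P b) -> connect e x y -> P y.
Proof.
move=> Px hP /connectP [s]; elim: s x Px => [|z s IH] x Px /=; first by move=> _ ->.
by case/andP => exz ps hy; apply: (IH z (hP _ _ Px exz) ps hy).
Qed.

Lemma connect_mono L L' x y : L \subset L' ->
  connect (fun a b => (a, b) \in L) x y -> connect (fun a b => (a, b) \in L') x y.
Proof.
move=> sL; apply: connect_sub => a b h; apply: connect1.
exact: (subsetP sL).
Qed.

Lemma connect_edge L a b : (a, b) \in L -> connect (fun a b => (a, b) \in L) a b.
Proof. by move=> h; apply: connect1. Qed.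

Lemma reach_mono L L' T T' : L \subset L' -> T \subset T' ->
  reach L T \subset reach L' T'.
Proof.
move=> sL sT; apply/subsetP => x; rewrite !inE => /existsP [t /andP [tT ct]].
apply/existsP; exists t; rewrite (subsetP sT) //=.
exact: connect_mono ct.
Qed.

Lemma card_bigcup_le (I : finType) (P : pred I) (F : I -> {set 'I_n}) :
  #|\bigcup_(i | P i) F i| <= \sum_(i | P i) #|F i|.
Proof.
apply: (big_ind2 (fun (A : {set 'I_n}) m => #|A| <= m)).
- by rewrite cards0.
- move=> A1 m1 A2 m2 h1 h2; apply: (leq_trans (leq_card_setU _ _)).
  exact: leq_add.
- by [].
Qed.

Lemma pointwise (E L Lh : edgeset n) T S :
  sigmaL (L2 E L Lh (T :|: S)) (T :|: S) <=
  sigmaL (L2 E L Lh S) S +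
  \sum_(v in T :\: S) (sigmaL (L2 E L Lh [set v]) (v |: S) - sigmaL L S).
Proof.
set A := reach (L2 E L Lh S) S; set D := reach L S.
set C := fun v => reach (L2 E L Lh [set v]) (v |: S).
have DA : D \subset A by apply: reach_mono => //; apply: subsetUl.
have DC : forall v, D \subset C v.
  by move=> v; apply: reach_mono; [apply: subsetUl | apply: subsetUr].
have sub : reach (L2 E L Lh (T :|: S)) (T :|: S) \subset
    A :|: \bigcup_(v in T :\: S) (C v :\: D).
  apply/subsetP => x; rewrite inE => /existsP [t /andP [tU ct]].
  have [w wU cw] : exists2 w, w \in T :|: S &
      connect (fun a b => (a, b) \in L2 E L Lh [set w]) w x.
    move: ct; apply: (@connect_ind _ _ (fun y => exists2 w, w \in T :|: S &
      connect (fun a b => (a, b) \in L2 E L Lh [set w]) w y)).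
      by exists t => //; apply: connect0.
    move=> a b [w wU cw]; rewrite /L2 !inE => /orP [abL | /andP [abLh /andP [abE aU]]].
      exists w => //; apply: (connect_trans cw).
      have h : (a, b) \in L2 E L Lh [set w] by rewrite /L2 !inE abL.
      by apply/connectP; exists [:: b] => //=; rewrite h.
    exists a; first by rewrite inE.
    have h : (a, b) \in L2 E L Lh [set a] by rewrite /L2 !inE abLh abE /= eqxx orbT.
    by apply/connectP; exists [:: b] => //=; rewrite h.
  case: (boolP (w \in S)) => wS.
    rewrite inE; apply/orP; left; rewrite inE; apply/existsP; exists w.
    rewrite wS /=; apply: connect_mono cw.
    apply/subsetP => e; rewrite /L2 !inE => /orP [->//|/andP [h1 /andP [h2 /eqP h3]]].
    by rewrite h1 h2 h3 wS orbT.
  case: (boolP (x \in D)) => xD.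
    by rewrite inE (subsetP DA).
  rewrite inE; apply/orP; right; apply/bigcupP; exists w.
    by move: wU; rewrite !inE (negbTE wS) ?orbF => ->.
  rewrite inE xD /= inE; apply/existsP; exists w; rewrite !inE eqxx /=.
  exact: cw.
rewrite /sigmaL; apply: (leq_trans (subset_leq_card sub)).
apply: (leq_trans (leq_card_setU _ _)); rewrite leq_add2l.
apply: (leq_trans (card_bigcup_le _ _ _)).
apply: leq_sum => v _; rewrite cardsD.
by rewrite (setIidPr (DC v)).
Qed.

Lemma dom_step (pi : policy n) L psi v : v \in dom psi -> v \in dom (pstep pi L psi).
Proof.
rewrite /pstep; case: (pi psi) => // u; rewrite !inE ffunE.
by case: (v == u).
Qed.

Lemma dom_agree (pi : policy n) L L' v :
  (forall u z, u != v -> ((u, z) \in L) = ((u, z) \in L')) ->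
  (v \in dom (Psi pi L)) = (v \in dom (Psi pi L')).
Proof.
move=> hLL; rewrite /Psi.
suff : forall m, ((v \in dom (iter m (pstep pi L) [ffun _ => None])) =
                  (v \in dom (iter m (pstep pi L') [ffun _ => None]))) /\
  (v \notin dom (iter m (pstep pi L) [ffun _ => None]) ->
    iter m (pstep pi L) [ffun _ => None] = iter m (pstep pi L') [ffun _ => None]).
  by move/(_ n) => [].
elim=> [|m [IH1 IH2]] /=; first by split.
case: (boolP (v \in dom (iter m (pstep pi L) [ffun _ => None]))) => hv.
  have hv' := hv; rewrite IH1 in hv'.
  by rewrite !dom_step //; split.
rewrite -(IH2 hv).
set psi := iter m (pstep pi L) [ffun _ => None].
rewrite /pstep; case: (pi psi) => [u|]; last by split.
case: (eqVneq u v) => [->|uv].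
  by rewrite !inE !ffunE eqxx.
have -> : Phi L u = Phi L' u.
  by rewrite /Phi; congr (_ |: _); apply/setP => z; rewrite !inE hLL.
split => //.
Qed.

End C.

Local Open Scope ring_scope.
Section S.
Variable (R : realFieldType) (n : nat) (p : 'I_n -> 'I_n -> R).

Lemma sum_split (T : finType) (O : {set T}) (F G : {set T} -> R) :
 (forall A : {set T}, ~~ [disjoint A & O] -> F A = 0) ->
 (forall B : {set T}, ~~ (B \subset O) -> G B = 0) ->
 \sum_(L : {set T}) F (L :\: O) * G (L :&: O) = (\sum_A F A) * (\sum_B G B).
Proof.
move=> hF hG.
rewrite big_distrlr /= pair_big /=.
rewrite (partition_big (fun ab : {set T} * {set T} => ab.1 :|: ab.2) predT) //=.
apply: eq_bigr => L _.
rewrite (bigD1 (L :\: O, L :&: O)) /=; last by rewrite setUC setID eqxx.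
rewrite big1 ?addr0 // => [[A B]] /= /andP[/eqP hU hne].
case: (boolP [disjoint A & O]) => hA; last by rewrite hF ?mul0r.
case: (boolP (B \subset O)) => hB; last by rewrite hG ?mulr0.
exfalso; move/negP: hne; apply; apply/eqP.
rewrite -hU setDUl setIUl (setDidPl hA) (disjoint_setI0 hA) (setIidPl hB).
move: hB; rewrite -setD_eq0 => /eqP ->.
by rewrite setU0 set0U.
Qed.

Lemma prL_split (E O L : edgeset n) :
  prL E p L = prL (E :\: O) p (L :\: O) * prL (E :&: O) p (L :&: O).
Proof.
rewrite /prL.
have -> : (L \subset E) = (L :\: O \subset E :\: O) && (L :&: O \subset E :&: O).
  apply/idP/andP => [sLE|[s1 s2]].
    by split; [apply: setSD | apply: setSI].
  apply/subsetP => x xL; case: (boolP (x \in O)) => xO.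
    have : x \in L :&: O by rewrite inE xL xO.
    by move/(subsetP s2); rewrite inE => /andP[].
  have : x \in L :\: O by rewrite inE xL xO.
  by move/(subsetP s1); rewrite inE => /andP[].
case: (L :\: O \subset E :\: O); case: (L :&: O \subset E :&: O);
  rewrite /= ?mulr0 ?mul0r //.
rewrite (big_setID O) /= mulrC; congr (_ * _); apply: eq_bigr => e;
  rewrite !inE => /andP[h1 h2].
  by rewrite ?h1 ?h2 ?andbT.
by rewrite ?h1 ?h2 ?andbT.
Qed.

Lemma prL_D0 (E O A : edgeset n) : ~~ [disjoint A & O] -> prL (E :\: O) p A = 0.
Proof.
move=> hA; rewrite /prL; case: ifP => // sA; exfalso; move/negP: hA; apply.
apply/pred0P => x /=; apply/negbTE/negP => /andP[xA xO].
by move/(subsetP sA): xA; rewrite inE xO.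
Qed.

Lemma prL_I0 (E O B : edgeset n) : ~~ (B \subset O) -> prL (E :&: O) p B = 0.
Proof.
move=> hB; rewrite /prL; case: ifP => // sB; exfalso; move/negP: hB; apply.
by apply: (subset_trans sB); apply: subsetIr.
Qed.

Lemma prL_sum0 : \sum_L prL set0 p L = 1.
Proof.
rewrite (bigD1 set0) //= big1 ?addr0.
  by rewrite /prL sub0set big_set0.
by move=> L hL; rewrite /prL subset0 (negbTE hL).
Qed.

Lemma prL_sum_1 (e0 : 'I_n * 'I_n) : \sum_L prL [set e0] p L = 1.
Proof.
rewrite (bigD1 set0) //= (bigD1 [set e0]) /=; last first.
  by apply/eqP => /setP /(_ e0); rewrite !inE eqxx.
rewrite big1 ?addr0.
  rewrite /prL sub0set subxx !big_set1 !inE eqxx.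
  by rewrite subrK.
move=> L /andP [h0 h1]; rewrite /prL subset1 (negbTE h0) (negbTE h1) //.
Qed.

Lemma prL_sum (E : edgeset n) : \sum_L prL E p L = 1.
Proof.
move: {2}#|E| (leqnn #|E|) => m; elim: m E => [|m IH] E hE;
  case: (set_0Vmem E) => [->|[e0 e0E]]; try exact: prL_sum0.
  by move: hE; rewrite (cardsD1 e0) e0E.
rewrite (eq_bigr (fun L => prL (E :\: [set e0]) p (L :\: [set e0]) *
   prL (E :&: [set e0]) p (L :&: [set e0]))); last by move=> L _; rewrite -prL_split.
rewrite sum_split; last 2 first.
- by move=> A; apply: prL_D0.
- by move=> B; apply: prL_I0.
rewrite IH; last by move: hE; rewrite (cardsD1 e0) e0E.
rewrite (setIidPr _) ?prL_sum_1 ?mulr1 //.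
by rewrite sub1set.
Qed.

Lemma indep (E O : edgeset n) (a b : edgeset n -> R) :
  (forall L, a L = a (L :\: O)) -> (forall L, b L = b (L :&: O)) ->
  \sum_L prL E p L * (a L * b L) =
  (\sum_L prL E p L * a L) * (\sum_L prL E p L * b L).
Proof.
move=> ha hb.
have ss : forall f g : edgeset n -> R, (forall L, f L = f (L :\: O)) ->
   (forall L, g L = g (L :&: O)) ->
   \sum_L prL E p L * (f L * g L) =
   (\sum_A prL (E :\: O) p A * f A) * (\sum_B prL (E :&: O) p B * g B).
  move=> f g hf hg; rewrite -(@sum_split _ O).
  - by apply: eq_bigr => L _; rewrite (prL_split E O) (hf L) (hg L); ring.
  - by move=> A hA; rewrite prL_D0 ?mul0r.
  - by move=> B hB; rewrite prL_I0 ?mul0r.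
rewrite ss //.
have -> : \sum_L prL E p L * a L = \sum_L prL E p L * (a L * (fun _ => 1) L).
  by apply: eq_bigr => L _; rewrite mulr1.
have -> : \sum_L prL E p L * b L = \sum_L prL E p L * ((fun _ => 1) L * b L).
  by apply: eq_bigr => L _; rewrite mul1r.
rewrite !ss //.
under [X in _ = (_ * X) * _]eq_bigr do rewrite mulr1.
under [X in _ = _ * (X * _)]eq_bigr do rewrite mulr1.
by rewrite !prL_sum mulr1 mul1r.
Qed.

End S.

Theorem lemma10 (R : realFieldType) (n : nat) (E : edgeset n)
  (p : 'I_n -> 'I_n -> R)
  (hp : forall u v, (u, v) \in E -> 0 <= p u v <= 1)
  (k : nat) (hk : (2 <= k <= n)%N)
  (pi : policy n) (hsize : has_size E pi k)
  (hopt : forall pi' : policy n, has_size E pi' k ->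
            sigma_pol E p pi' <= sigma_pol E p pi)
  (S : {set 'I_n}) :
  Exp2 E p (fun L Lh =>
    (sigmaL (L2 E L Lh (dom (Psi pi Lh) :|: S)) (dom (Psi pi Lh) :|: S))%:R)
  <= sigma2 E p S + \sum_(v in ~: S) xsel E p pi v * Delta2 E p S v.
Proof.
have pge0 : forall L, 0 <= prL E p L.
  move=> L; rewrite /prL; case: ifP => // _; apply: prodr_ge0 => -[u w] /hp /andP [h0 h1].
  by case: ifP => _ //=; rewrite subr_ge0.
have Exp2_le : forall f g : edgeset n -> edgeset n -> R,
    (forall L Lh, f L Lh <= g L Lh) -> Exp2 E p f <= Exp2 E p g.
  move=> f g h; rewrite /Exp2; apply: ler_sum => L _; apply: ler_sum => Lh _.
  by apply: ler_wpM2l; [apply: mulr_ge0|apply: h].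
pose a := fun v (Lh : edgeset n) => ((v \in dom (Psi pi Lh)))%:R : R.
pose g := fun v (L Lh : edgeset n) =>
  ((sigmaL (L2 E L Lh [set v]) (v |: S))%:R - (sigmaL L S)%:R : R).
apply: (le_trans (Exp2_le _ (fun L Lh => (sigmaL (L2 E L Lh S) S)%:R +
   \sum_(v in ~: S) a v Lh * g v L Lh) _)).
  move=> L Lh; have := @pointwise n E L Lh (dom (Psi pi Lh)) S.
  rewrite -(ler_nat R) natrD natr_sum => h; apply: (le_trans h).
  rewrite lerD2l.
  rewrite [X in _ <= X](bigID (fun v => v \in dom (Psi pi Lh))) /=.
  rewrite [X in _ <= _ + X]big1 ?addr0; last first.
    by move=> v /andP[_ hv]; rewrite /a (negbTE hv) mul0r.
  rewrite (eq_bigl (fun v => (v \in ~:S) && (v \in dom (Psi pi Lh)))); last first.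
    by move=> v; rewrite !inE andbC.
  apply: ler_sum => v /andP[_ hv]; rewrite /a hv mul1r /g natrB //.
  apply: subset_leq_card; apply: reach_mono; [apply: subsetUl | apply: subsetUr].
rewrite le_eqVlt; apply/orP; left; apply/eqP.
rewrite /sigma2 /Exp2.
rewrite [X in _ = _ + X](eq_bigr (fun v => \sum_L \sum_Lh
    prL E p L * prL E p Lh * (a v Lh * g v L Lh))); last first.
  move=> v _; rewrite /xsel /Delta2 /Exp1 /Exp2 mulr_sumr; apply: eq_bigr => L _.
  have -> : \sum_Lh prL E p L * prL E p Lh * (a v Lh * g v L Lh) =
     prL E p L * \sum_Lh prL E p Lh * (a v Lh * g v L Lh).
    by rewrite mulr_sumr; apply: eq_bigr => Lh _; rewrite -mulrA.
  have -> : \sum_Lh prL E p L * prL E p Lh *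
      ((sigmaL (L2 E L Lh [set v]) (v |: S))%:R - (sigmaL L S)%:R) =
     prL E p L * \sum_Lh prL E p Lh * g v L Lh.
    by rewrite mulr_sumr; apply: eq_bigr => Lh _; rewrite -mulrA.
  rewrite (@indep R n p E [set e | e.1 == v]).
  - by rewrite mulrCA.
  - move=> Lh; rewrite /a (@dom_agree n pi Lh (Lh :\: [set e | e.1 == v]) v) //.
    by move=> u z uv; rewrite !inE /= (negbTE uv).
  - move=> Lh; rewrite /g; congr (_%:R - _); congr (sigmaL _ _).
    rewrite /L2; congr (_ :|: _); apply/setP => e; rewrite !inE.
    by case: (e.1 == v); rewrite ?andbT ?andbF.
rewrite [X in _ = _ + X]exchange_big -big_split; apply: eq_bigr => L _ /=.
rewrite [X in _ = _ + X]exchange_big -big_split; apply: eq_bigr => Lh _ /=.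
by rewrite mulrDr mulr_sumr.
Qed.
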